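(* Let $m,n\ge 1$, let $\lambda_1,\dots,\lambda_m>0$ and $d_1,\dots,d_n\in\mathbb{R}$, and let $\Phi\in\mathbb{C}^{m\times n}$ be the matrix with entries $\Phi_{kj}=e^{2\pi i d_j/\lambda_k}$. Let $v\in\mathbb{C}^m$, let $\epsilon>0$, and let $C\in\mathbb{R}^{2m\times 2m}$ be a symmetric positive definite (covariance) matrix. For a complex matrix $M\in\mathbb{C}^{m\times n}$ and a complex vector $w\in\mathbb{C}^m$, consider the optimization problem $$P(M,w):\quad \min_{x\in\mathbb{R}^n,\ x\ge 0}\ \|x\|_1 \quad\text{subject to}\quad (\widetilde{M}x-\widetilde{w})^T C^{-1}(\widetilde{M}x-\widetilde{w})\le \epsilon^2\|\widetilde{w}\|^2,$$ where $\widetilde{w}=\begin{pmatrix}\mathrm{Re}\,w\\ \mathrm{Im}\,w\end{pmatrix}\in\mathbb{R}^{2m}$ and $\widetilde{M}=\begin{pmatrix}\mathrm{Re}\,M\\ \mathrm{Im}\,M\end{pmatrix}\in\mathbb{R}^{2m\times n}$ (real and imaginary parts stacked), $x\ge 0$ is meant entrywise, and $\|\cdot\|$ is the Euclidean norm. For $s>0$ and $\Delta\in\mathbb{R}$ define the $m\times m$ complex diagonal matrix $$F_{s,\Delta}=s\cdot\mathrm{diag}\big(e^{-2\pi i\Delta/\lambda_1},\dots,e^{-2\pi i\Delta/\lambda_m}\big).$$ Let $x^*$ be the solution of $P(\Phi,v)$, and let $x^*_{s,\Delta}$ be the solution of $P(F_{s,\Delta}\Phi,\,F_{s,\Delta}v)$.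 Suppose that $C$ is diagonal and satisfies $C_{jj}=C_{j+m,j+m}$ for $j=1,\dots,m$. Then $x^*_{s,\Delta}=x^*$.
   Context: This arises in Time-of-Flight depth sensing: $v$ is the complex sensor measurement at $m$ modulation frequencies, $\lambda_k$ is half the wavelength of the $k$-th modulation frequency, $d_j$ ranges over a discretized set of candidate path distances, and $x$ (the ''backscattering'') gives nonnegative return strengths at those distances, so that ideally $v=\Phi x$ plus Gaussian noise with covariance $C$ on the stacked real representation. *)

(* Defs.v *)
From HB Require Import structures.
From mathcomp Require Import all_boot all_order all_algebra.
From mathcomp Require Import all_classical all_reals all_analysis.
From mathcomp Require Import complex.
Set Implicit Arguments. Unset Strict Implicit. Unset Printing Implicit Defensive.
Import Order.TTheory GRing.Theory Num.Theory.
Local Open Scope ring_scope.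
Local Open Scope complex_scope.

Definition expi (R : realType) (t : R) : R[i] := Complex (cos t) (sin t).

Definition tof_matrix (R : realType) (m n : nat) (lam : 'I_m -> R) (d : 'I_n -> R)
  : 'M[R[i]]_(m, n) :=
  \matrix_(k < m, j < n) expi (2 * pi * d j / lam k).

Definition Fmat (R : realType) (m : nat) (lam : 'I_m -> R) (s D : R) : 'M[R[i]]_m :=
  (s%:C) *: diag_mx (\row_(k < m) expi (- (2 * pi * D / lam k))).

Definition stack (R : realType) (m n : nat) (M : 'M[R[i]]_(m, n)) : 'M[R]_(m + m, n) :=
  col_mx (map_mx (@complex.Re R) M) (map_mx (@complex.Im R) M).

Definition l1norm (R : realType) (n : nat) (x : 'cV[R]_n) : R := \sum_(j < n) `|x j 0|.

Definition sqnorm (R : realType) (p : nat) (u : 'cV[R]_p) : R := (u^T *m u) 0 0.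

Definition nonneg_vec (R : realType) (n : nat) (x : 'cV[R]_n) : Prop :=
  forall j, 0 <= x j 0.

Definition feasible (R : realType) (m n : nat) (C : 'M[R]_(m + m)) (eps : R)
  (M : 'M[R[i]]_(m, n)) (w : 'cV[R[i]]_m) (x : 'cV[R]_n) : Prop :=
  nonneg_vec x /\
  let r := stack M *m x - stack w in
  (r^T *m invmx C *m r) 0 0 <= eps ^+ 2 * sqnorm (stack w).

Definition solves (R : realType) (m n : nat) (C : 'M[R]_(m + m)) (eps : R)
  (M : 'M[R[i]]_(m, n)) (w : 'cV[R[i]]_m) (x : 'cV[R]_n) : Prop :=
  feasible C eps M w x /\
  forall y, feasible C eps M w y -> l1norm x <= l1norm y.

Definition sym_posdef (R : realType) (p : nat) (C : 'M[R]_p) : Prop :=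
  C^T = C /\ forall u : 'cV[R]_p, u != 0 -> 0 < (u^T *m C *m u) 0 0.

(* Main.v *)
Require Import Defs.
From HB Require Import structures.
From mathcomp Require Import all_boot all_order all_algebra.
From mathcomp Require Import all_classical all_reals all_analysis.
From mathcomp Require Import complex.
From mathcomp Require Import ring lra.
Import Order.TTheory GRing.Theory Num.Theory.
Local Open Scope ring_scope.
Local Open Scope complex_scope.

Section S.
Variables (R : realType) (m : nat) (lam : 'I_m -> R) (s D : R).
Let th k := - (2 * pi * D / lam k).
Let a k := cos (th k).
Let b k := sin (th k).

Lemma stackF_l p (M : 'M[R[i]]_(m,p)) k j :
  stack (Fmat lam s D *m M) (lshift m k) j
  = s * (a k * complex.Re (M k j) - b k * complex.Im (M k j)).
Proof.
rewrite /stack col_mxEu mxE /Fmat -scalemxAl mul_diag_mx !mxE /expi.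
rewrite /a /b /th; case: (M k j) => x y /=; ring.
Qed.

Lemma stackF_r p (M : 'M[R[i]]_(m,p)) k j :
  stack (Fmat lam s D *m M) (rshift m k) j
  = s * (b k * complex.Re (M k j) + a k * complex.Im (M k j)).
Proof.
rewrite /stack col_mxEd mxE /Fmat -scalemxAl mul_diag_mx !mxE /expi.
rewrite /a /b /th; case: (M k j) => x y /=; ring.
Qed.
End S.
Lemma resE (R : realType) q p (A : 'M[R]_(q,p)) (x : 'cV[R]_p) (B : 'cV[R]_q) i :
  (A *m x - B) i 0 = \sum_j A i j * x j 0 - B i 0.
Proof. by rewrite !mxE. Qed.

Lemma stack_l (R : realType) m p (M : 'M[R[i]]_(m,p)) k j :
  stack M (lshift m k) j = complex.Re (M k j).
Proof. by rewrite /stack col_mxEu mxE. Qed.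

Lemma stack_r (R : realType) m p (M : 'M[R[i]]_(m,p)) k j :
  stack M (rshift m k) j = complex.Im (M k j).
Proof. by rewrite /stack col_mxEd mxE. Qed.

Section T.
Variables (R : realType) (m : nat) (lam : 'I_m -> R) (s D : R).
Let a k := cos (- (2 * pi * D / lam k)).
Let b k := sin (- (2 * pi * D / lam k)).

Lemma resid_l p (M : 'M[R[i]]_(m,p)) (x : 'cV[R]_p) (w : 'cV[R[i]]_m) k :
  (stack (Fmat lam s D *m M) *m x - stack (Fmat lam s D *m w)) (lshift m k) 0
  = s * (a k * (stack M *m x - stack w) (lshift m k) 0
         - b k * (stack M *m x - stack w) (rshift m k) 0).
Proof.
rewrite !resE stackF_l !stack_l !stack_r.
under eq_bigr do rewrite stackF_l.
under [X in _ = s * (_ * (X - _) - _)]eq_bigr do rewrite stack_l.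
under [X in _ = s * (_ - _ * (X - _))]eq_bigr do rewrite stack_r.
set S1 := \sum_(j < p) _. set S2 := \sum_(j < p) _. set S3 := \sum_(j < p) _.
have -> : S1 = s * a k * S2 - s * b k * S3.
  rewrite /S1 /S2 /S3 !mulr_sumr -sumrB; apply: eq_bigr => j _; rewrite /a /b; ring.
rewrite /a /b; ring.
Qed.

Lemma resid_r p (M : 'M[R[i]]_(m,p)) (x : 'cV[R]_p) (w : 'cV[R[i]]_m) k :
  (stack (Fmat lam s D *m M) *m x - stack (Fmat lam s D *m w)) (rshift m k) 0
  = s * (b k * (stack M *m x - stack w) (lshift m k) 0
         + a k * (stack M *m x - stack w) (rshift m k) 0).
Proof.
rewrite !resE stackF_r !stack_l !stack_r.
under eq_bigr do rewrite stackF_r.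
under [X in _ = s * (_ * (X - _) + _)]eq_bigr do rewrite stack_l.
under [X in _ = s * (_ + _ * (X - _))]eq_bigr do rewrite stack_r.
set S1 := \sum_(j < p) _. set S2 := \sum_(j < p) _. set S3 := \sum_(j < p) _.
have -> : S1 = s * b k * S2 + s * a k * S3.
  rewrite /S1 /S2 /S3 !mulr_sumr -big_split; apply: eq_bigr => j _ /=; rewrite /a /b; ring.
rewrite /a /b; ring.
Qed.

Lemma quad_scale (d : 'I_(m+m) -> R) (u u' : 'cV[R]_(m+m)) :
  (forall k, d (lshift m k) = d (rshift m k)) ->
  (forall k, u' (lshift m k) 0 = s * (a k * u (lshift m k) 0 - b k * u (rshift m k) 0)) ->
  (forall k, u' (rshift m k) 0 = s * (b k * u (lshift m k) 0 + a k * u (rshift m k) 0)) ->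
  \sum_i u' i 0 ^+ 2 * d i = s ^+ 2 * \sum_i u i 0 ^+ 2 * d i.
Proof.
move=> hd hl hr; rewrite !big_split_ord /= mulrDr !mulr_sumr -!big_split /=.
apply: eq_bigr => k _; rewrite hl hr -hd.
have := cos2Dsin2 (- (2 * pi * D / lam k)); rewrite -/(a k) -/(b k) => h.
rewrite -[s ^+ 2]mulr1 -h; ring.
Qed.
End T.

Lemma form_diag (R : realType) p (u : 'cV[R]_p) (dr : 'rV[R]_p) :
  (u^T *m diag_mx dr *m u) 0 0 = \sum_i u i 0 ^+ 2 * dr 0 i.
Proof.
rewrite mul_mx_diag mxE; apply: eq_bigr => i _; rewrite !mxE; ring.
Qed.

Lemma sqnorm_sum (R : realType) p (u : 'cV[R]_p) :
  sqnorm u = \sum_i u i 0 ^+ 2 * 1.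
Proof. rewrite /sqnorm mxE; apply: eq_bigr => i _; rewrite !mxE; ring. Qed.

Lemma invmx_diag (R : realType) p (C : 'M[R]_p) :
  is_diag_mx C -> (forall i, C i i != 0) ->
  invmx C = diag_mx (\row_i (C i i)^-1).
Proof.
move=> /diag_mxP [dr ->] hnz.
have h : diag_mx dr *m diag_mx (\row_i ((diag_mx dr) i i)^-1) = 1%:M.
  rewrite mulmx_diag; apply/matrixP => i j; rewrite !mxE eqxx mulr1n.
  have := hnz i; rewrite !mxE eqxx mulr1n => hi. by rewrite divff.
have [u1 _] := mulmx1_unit h.
by rewrite -[LHS]mulmx1 -h mulmxA mulVmx // mul1mx.
Qed.

Theorem theorem1 (R : realType) (m n : nat) (hm : (0 < m)%N) (hn : (0 < n)%N)
  (lam : 'I_m -> R) (hlam : forall k, 0 < lam k) (d : 'I_n -> R)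
  (v : 'cV[R[i]]_m) (eps : R) (heps : 0 < eps)
  (C : 'M[R]_(m + m)) (hC : sym_posdef C)
  (s D : R) (hs : 0 < s)
  (hdiag : is_diag_mx C)
  (hpair : forall j : 'I_m, C (lshift m j) (lshift m j) = C (rshift m j) (rshift m j)) :
  forall x : 'cV[R]_n,
    solves C eps (Fmat lam s D *m tof_matrix lam d) (Fmat lam s D *m v) x
    <-> solves C eps (tof_matrix lam d) v x.
Proof.
have cpos : forall i, 0 < C i i.
  move=> i; have := hC.2 (delta_mx i 0).
  have hD : delta_mx i 0 != 0 :> 'cV[R]_(m+m).
    apply/eqP => /matrixP /(_ i 0); rewrite !mxE !eqxx /= => /eqP.
    by rewrite oner_eq0.
  move=> /(_ hD); case/diag_mxP: hdiag => dr hCd; rewrite hCd form_diag.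
  rewrite (bigD1 i) //= big1 => [|j hj]; last by rewrite !mxE (negbTE hj) /= expr0n /= mul0r.
  by rewrite !mxE !eqxx /= expr1n mul1r addr0 mulr1n.
have hinv : invmx C = diag_mx (\row_i (C i i)^-1).
  by apply: invmx_diag => // i; rewrite gt_eqF.
have hdp : forall k, (\row_i (C i i)^-1) 0 (lshift m k) = (\row_i (C i i)^-1) 0 (rshift m k).
  by move=> k; rewrite !mxE hpair.
have feq : forall x, feasible C eps (Fmat lam s D *m tof_matrix lam d) (Fmat lam s D *m v) x
    <-> feasible C eps (tof_matrix lam d) v x.
  move=> x; rewrite /feasible /= hinv !form_diag !sqnorm_sum.
  rewrite (@quad_scale R m lam s D _ (stack (tof_matrix lam d) *m x - stack v) _ hdp); last 2 first.
  - by move=> k; rewrite resid_l.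
  - by move=> k; rewrite resid_r.
  rewrite (@quad_scale R m lam s D (fun _ => 1) (stack v)) //; last 2 first.
  - by move=> k; rewrite stackF_l !stack_l !stack_r.
  - by move=> k; rewrite stackF_r !stack_l !stack_r.
  rewrite mulrCA ler_pM2l ?exprn_gt0 //.
by move=> x; rewrite /solves; split => -[hf hmin]; split;
  try (by apply/feq); move=> y hy; apply: hmin; apply/feq.
Qed.
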